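(* Let $G$ be an oriented graph derived from a Burling tree $T$ and let $uv$ be a bottom arc of $G$ with respect to $T$. Let $G'$ be obtained from $G$ by subdividing $uv$ into $uwv$ (removing the arc $uv$ and adding a new vertex $w$ with arcs $uw$ and $wv$). Then $G'$ can be derived from a Burling tree $T'$ in such a way that, with respect to $T'$: $uw$ is a bottom arc of $G'$; $wv$ is both a bottom arc and a top arc of $G'$; every top arc of $G$ with respect to $T$ other than $uv$ is a top arc of $G'$; and every bottom arc of $G$ with respect to $T$ other than $uv$ is a bottom arc of $G'$.
   Context: Oriented graphs are finite, without loops, multiple arcs or pairs of opposite arcs. In a rooted tree $T$ with root $r$, each non-root vertex $v$ has a parent $p(v)$; children, leaves, ancestors and descendants are as usual. A branch is a sequence $v_1\dots v_k$ ($k\ge0$) with $v_i$ the parent of $v_{i+1}$; it starts at $v_1$. A Burling tree is a 4-tuple $(T,r,\ell,c)$: $T$ a rooted tree with root $r$; $\ell$ assigns to each non-leaf vertex $v$ one of its children $\ell(v)$ (the last-born of $v$); $c$ assigns to every vertex $v$ that is neither the root nor a last-born the vertex-set of a (possibly empty) branch starting at $\ell(p(v))$, and $c(v)=\emptyset$ if $v$ is the root or a last-born. The oriented graph fully derived from it has vertex-set $V(T)$ and an arc $uv$ iff $v\in c(u)$; an oriented graph is derived from the Burling tree if it is an induced subgraph of the fully derived one. If $G$ is derived from $T$ and $uv$ is an arc of $G$, then all out-neighbors of $u$ lie on one branch of $T$; $uv$ is a top arc with respect to $T$ if $v$ is the out-neighbor of $u$ closest in $T$ to the root, and a bottom arc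 with respect to $T$ if $v$ is the out-neighbor of $u$ furthest in $T$ from the root. *)

(* Defs.v *)
From mathcomp Require Import all_boot.
Set Implicit Arguments. Unset Strict Implicit. Unset Printing Implicit Defensive.

(* A Burling tree (T, r, l, c) on a finite vertex type V.
   par v = Some q  iff q is the parent of v;  par v = None iff v is the root.
   lb v = Some x   iff v is a non-leaf with last-born child x. *)
Record burling_tree (V : finType) := BurlingTree {
  bt_root : V;
  bt_par : V -> option V;
  bt_lb : V -> option V;
  bt_c : V -> {set V};
  bt_par_none : forall v, bt_par v = None <-> v = bt_root;
  bt_reach : forall v, exists n, iter n (obind bt_par) (Some v) = Some bt_root;
  bt_lb_child : forall v x, bt_lb v = Some x -> bt_par x = Some v;
  bt_lb_leaf : forall v, bt_lb v = None -> forall x, bt_par x <> Some v;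
  bt_c_trivial : forall v, (v = bt_root \/ exists y, bt_lb y = Some v) -> bt_c v = set0;
  (* otherwise c v is the vertex set of a (possibly empty) branch starting at l(p(v)) *)
  bt_c_branch : forall v q x, bt_par v = Some q -> bt_lb q = Some x -> x <> v ->
    exists s : seq V, bt_c v = [set y in s] /\
      (s = [::] \/ exists t, s = x :: t /\ path (fun a b => bt_par b == Some a) x t)
}.

Definition anc (V : finType) (T : burling_tree V) (a b : V) : Prop :=
  exists n, iter n (obind (bt_par T)) (Some b) = Some a.

(* An oriented graph with vertex type W and arc relation A is derived from T via
   the injective vertex map f: it is (isomorphic via f to) an induced subgraph of
   the graph fully derived from T (arc xy iff y in c(x)). *)
Definition derived (V W : finType) (T : burling_tree V) (A : rel W) (f : W -> V) : Prop :=
  injective f /\ forall x y, A x y = (f y \in bt_c T (f x)).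

(* uv is a top arc: v is the out-neighbour of u closest to the root
   (all out-neighbours lie on one branch, so: f v is an ancestor-or-self of all). *)
Definition top_arc (V W : finType) (T : burling_tree V) (A : rel W) (f : W -> V) (u v : W) : Prop :=
  A u v /\ forall y, A u y -> anc T (f v) (f y).

(* uv is a bottom arc: v is the out-neighbour of u furthest from the root. *)
Definition bottom_arc (V W : finType) (T : burling_tree V) (A : rel W) (f : W -> V) (u v : W) : Prop :=
  A u v /\ forall y, A u y -> anc T (f y) (f v).

(* Subdividing the arc uv into u w v; the new vertex w is None. *)
Definition subdiv (W : finType) (A : rel W) (u v : W) : rel (option W) :=
  fun x y => match x, y with
  | Some a, Some b => A a b && ((a, b) != (u, v))
  | Some a, None => a == u
  | None, Some b => b == v
  | None, None => false
  end.

(* Main.v *)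
Require Import Defs.
From mathcomp Require Import all_boot.
Set Implicit Arguments. Unset Strict Implicit.

Section G.
End G.

Lemma iter_none V (T : burling_tree V) n : iter n (obind (bt_par T)) None = None.
Proof. by elim: n => //= n ->. Qed.

Lemma acyc V (T : burling_tree V) n v : iter n.+1 (obind (bt_par T)) (Some v) <> Some v.
Proof.
move=> H. have [m Hm] := bt_reach T v.
have E: iter (m + n.+1) (obind (bt_par T)) (Some v) = Some (bt_root T) by rewrite iterD H.
move: E; rewrite addnC iterD Hm iterSr /=.
have -> : bt_par T (bt_root T) = None by apply/(bt_par_none T).
by rewrite iter_none.
Qed.

Lemma PLs V (T : burling_tree V) x t y : path (fun a b => bt_par T b == Some a) x t ->
  y \in t -> exists k, iter k.+1 (obind (bt_par T)) (Some y) = Some x.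
Proof.
elim: t x => //= y0 t IH x /andP[/eqP H0 Hp]; rewrite inE => /orP[/eqP->|Hy].
  by exists 0.
have [k Hk] := IH _ Hp Hy. exists k.+1. by rewrite iterS Hk /= H0.
Qed.

Lemma take_anc V (T : burling_tree V) x t X y :
  path (fun a b => bt_par T b == Some a) x t -> X \in x :: t -> y \in x :: t -> y != X ->
  anc T y X -> y \in take (index X (x :: t)) (x :: t).
Proof.
elim: t x => [|y0 t IH] x Hp HX Hy Hne Hanc.
  by move: HX Hy Hne; rewrite !inE => /eqP-> /eqP->; rewrite eqxx.
rewrite /=; case: (eqVneq x X) => [Ex|Nx].
  exfalso; subst x.
  move: Hy; rewrite inE (negbTE Hne) /= => Hy.
  have [k Hk] := PLs Hp Hy. case: Hanc => n Hn.
  apply: (@acyc V T (n + k) y). by rewrite -addnS iterD Hk.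
rewrite -/(index X (y0 :: t)) /= inE.
move: Hy; rewrite inE => /orP[->//|Hy].
move: Hp => /= /andP[_ Hp].
move: HX; rewrite inE eq_sym (negbTE Nx) /= => HX.
by rewrite (IH y0 Hp HX Hy Hne Hanc) orbT.
Qed.

Notation V3 V := (option (option (option V))).
Notation old z := (Some (Some (Some z))).

Definition chunk (V : finType) (X L y : V) : seq (V3 V) :=
  if (y == X) || (y == L) then [:: None; Some None; old y] else [:: old y].
Definition liftp (V : finType) (X L : V) (s : seq V) : seq (V3 V) :=
  flatten (map (chunk X L) s).
Definition hdlift (V : finType) (X L : V) (s : seq V) : seq (V3 V) :=
  match s with [::] => [::] | y :: t => old y :: liftp X L t end.

Definition npar (V : finType) (T : burling_tree V) (X L q : V) (v : V3 V) : option (V3 V) :=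
  match v with
  | Some (Some (Some z)) => if (z == X) || (z == L) then Some (Some None)
                            else omap (fun z => old z) (bt_par T z)
  | Some (Some None) => Some None
  | Some None => Some None
  | None => Some (old q)
  end.

Definition nlb (V : finType) (T : burling_tree V) (L q : V) (v : V3 V) : option (V3 V) :=
  match v with
  | Some (Some (Some z)) => if z == q then Some None else omap (fun z => old z) (bt_lb T z)
  | Some (Some None) => None
  | Some None => Some (old L)
  | None => Some (Some None)
  end.

Definition nc (V : finType) (T : burling_tree V) (X L U : V) (sU sX : seq V) (v : V3 V) : {set V3 V} :=
  match v with
  | Some (Some (Some z)) =>
      if z == U then [set y in liftp X L (take (index X sU) sU) ++ [:: None; Some (Some None)]]
      else if z == X then [set y in hdlift X L sX]
      else [set old y | y in bt_c T z] :|: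
           (if (X \in bt_c T z) || (L \in bt_c T z) then [set None; Some None] else set0)
  | Some (Some None) => [set Some None; old X]
  | _ => set0
  end.

Lemma liftp_cons (V : finType) (X L y : V) s : liftp X L (y :: s) = chunk X L y ++ liftp X L s.
Proof. by []. Qed.

Lemma mem_liftp_old (V : finType) (X L z : V) s : (old z \in liftp X L s) = (z \in s).
Proof.
elim: s => //= y s IH; rewrite liftp_cons mem_cat IH inE /chunk.
by case: ifP => _; rewrite !inE.
Qed.

Lemma mem_liftp_nw (V : finType) (X L : V) s : (Some (Some None) \in liftp X L s) = false.
Proof.
elim: s => //= y s IH; rewrite liftp_cons mem_cat IH /chunk.
by case: ifP => _; rewrite !inE.
Qed.

Lemma mem_liftp_b (V : finType) (X L : V) s : (None \in liftp X L s) = (X \in s) || (L \in s).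
Proof.
elim: s => //= y s IH; rewrite liftp_cons mem_cat IH /chunk !inE.
case: ifP => H; rewrite !inE /=.
  by case/orP: H => /eqP->; rewrite eqxx ?orbT.
by move: H; rewrite ![y == _]eq_sym => /negbT/norP[/negbTE-> /negbTE->].
Qed.

Lemma mem_liftp_d (V : finType) (X L : V) s : (Some None \in liftp X L s) = (X \in s) || (L \in s).
Proof.
elim: s => //= y s IH; rewrite liftp_cons mem_cat IH /chunk !inE.
case: ifP => H; rewrite !inE /=.
  by case/orP: H => /eqP->; rewrite eqxx ?orbT.
by move: H; rewrite ![y == _]eq_sym => /negbT/norP[/negbTE-> /negbTE->].
Qed.

Lemma set_liftp (V : finType) (X L : V) s S : S = [set y in s] ->
  [set y in liftp X L s] = [set old y | y in S] :|:
     (if (X \in S) || (L \in S) then [set None; Some None] else set0).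
Proof.
move=> ->; apply/setP => v; rewrite !inE.
have oinj : injective (fun y : V => old y) by move=> a b [].
case: v => [[[z|]|]|].
- rewrite mem_liftp_old (mem_imset _ _ oinj) inE.
  by case: ifP => _; rewrite ?inE ?orbF.
- rewrite mem_liftp_nw. case: ifP => _; rewrite ?inE /= ?orbF;
  by apply/esym/negbTE/imsetP => -[].
- rewrite mem_liftp_d ?inE. case: ifP => H; rewrite ?inE /= ?orbT ?orbF ?H //.
  by apply/esym/negbTE/imsetP => -[].
- rewrite mem_liftp_b ?inE. case: ifP => H; rewrite ?inE /= ?orbT ?orbF ?H //.
  by apply/esym/negbTE/imsetP => -[].
Qed.

Lemma last_liftp (V : finType) (X L : V) y0 x t :
  last y0 (liftp X L (x :: t)) = old (last x t).
Proof.
elim: t x y0 => [|y t IH] x y0.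
  by rewrite liftp_cons /chunk cats0; case: ifP.
by rewrite liftp_cons last_cat IH.
Qed.

Lemma liftp_path (V : finType) (T : burling_tree V) (X L q : V) x t :
  bt_par T X = Some q -> bt_par T L = Some q ->
  path (fun a b => bt_par T b == Some a) x t ->
  path (fun a b => npar T X L q b == Some a) (old x) (liftp X L t).
Proof.
move=> HX HL; elim: t x => //= y t IH x /andP[/eqP Hy Hp].
rewrite liftp_cons cat_path /chunk; case: ifP => H /=.
  have Hq : x = q by case/orP: H => /eqP Ey; subst y; congruence.
  subst x; rewrite H !eqxx /=.
  have := IH _ Hp; by rewrite /=.
by rewrite H Hy eqxx /= IH.
Qed.

Lemma last_liftp' (V : finType) (X L x : V) t :
  last (old x) (liftp X L t) = old (last x t).
Proof. by case: t => // y t; rewrite last_liftp. Qed.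

Lemma mem_hdlift_old (V : finType) (X L z : V) s : (old z \in hdlift X L s) = (z \in s).
Proof. by case: s => //= y s; rewrite !inE mem_liftp_old. Qed.

Lemma mem_hdlift_nw (V : finType) (X L : V) s : (Some (Some None) \in hdlift X L s) = false.
Proof. by case: s => //= y s; rewrite !inE mem_liftp_nw. Qed.

Lemma sim (V : finType) (T : burling_tree V) (X L q : V) :
  bt_par T X = Some q -> bt_par T L = Some q ->
  forall n b a, iter n (obind (bt_par T)) (Some b) = Some a ->
  exists m, iter m (obind (npar T X L q)) (Some (old b)) = Some (old a).
Proof.
move=> HX HL; elim=> [|n IH] b a.
  by move=> [->]; exists 0.
rewrite iterSr /=; case E: (bt_par T b) => [b1|]; last by rewrite iter_none.
move=> /IH [m Hm]; case H: ((b == X) || (b == L)).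
  have Eb1 : b1 = q by case/orP: H => /eqP Eb; subst b; congruence.
  subst b1; exists m.+3; by rewrite !iterSr /= H.
by exists m.+1; rewrite iterSr /= H E.
Qed.

Lemma anc_antisym (V : finType) (T : burling_tree V) a b : anc T a b -> anc T b a -> a = b.
Proof.
move=> [n Hn] [m Hm]; case: n Hn => [[]//|n] Hn.
exfalso; apply: (@acyc V T (m + n) b).
by rewrite -addnS iterD Hn.
Qed.

Lemma head_ok (V : finType) (T : burling_tree V) (X L q p0 x1 : V) x t :
  bt_par T X = Some q -> bt_par T L = Some q -> bt_lb T q = Some L ->
  bt_lb T p0 = Some x1 -> nlb T L q (old p0) = Some x ->
  path (fun a b => bt_par T b == Some a) x1 t ->
  exists t', liftp X L (x1 :: t) = x :: t' /\
    path (fun a b => npar T X L q b == Some a) x t' /\ last x t' = old (last x1 t).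
Proof.
move=> HX HL HL0 Hx1 Hx Hp.
have Hpx1 := bt_lb_child Hx1.
rewrite liftp_cons /chunk; case: ifP => H.
  have Ep : p0 = q by case/orP: H => /eqP E; subst x1; congruence.
  subst p0; move: Hx; rewrite /= eqxx => -[<-].
  exists [:: Some None, old x1 & liftp X L t]; split => //; split.
    by rewrite /= H !eqxx /= (liftp_path HX HL Hp).
  by rewrite /= last_liftp'.
have Np : p0 != q.
  apply/eqP => E; subst p0; move: Hx1; rewrite HL0 => -[E]; subst x1.
  by rewrite eqxx orbT in H.
move: Hx; rewrite /= (negbTE Np) Hx1 => -[<-].
exists (liftp X L t); split => //; split; first exact: liftp_path HX HL Hp.
exact: last_liftp'.
Qed.

Lemma ncE_old (V : finType) (T : burling_tree V) (X L U : V) sU sX z :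
  nc T X L U sU sX (old z) =
      if z == U then [set y in liftp X L (take (index X sU) sU) ++ [:: None; Some (Some None)]]
      else if z == X then [set y in hdlift X L sX]
      else [set old y | y in bt_c T z] :|:
           (if (X \in bt_c T z) || (L \in bt_c T z) then [set None; Some None] else set0).
Proof. by []. Qed.

Lemma ncE_w (V : finType) (T : burling_tree V) (X L U : V) sU sX :
  nc T X L U sU sX (Some (Some None)) = [set Some None; old X].
Proof. by []. Qed.

Theorem lemma3p6 (V W : finType) (T : burling_tree V) (A : rel W) (f : W -> V) (u v : W) :
  derived T A f -> bottom_arc T A f u v ->
  exists (V' : finType) (T' : burling_tree V') (f' : option W -> V'),
    derived T' (subdiv A u v) f' /\
    bottom_arc T' (subdiv A u v) f' (Some u) None /\
    bottom_arc T' (subdiv A u v) f' None (Some v) /\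
    top_arc T' (subdiv A u v) f' None (Some v) /\
    (forall x y, top_arc T A f x y -> (x, y) <> (u, v) ->
       top_arc T' (subdiv A u v) f' (Some x) (Some y)) /\
    (forall x y, bottom_arc T A f x y -> (x, y) <> (u, v) ->
       bottom_arc T' (subdiv A u v) f' (Some x) (Some y)).
Proof.
move=> [finj HA] [Huv Hbot].
have [U EU] : exists U, f u = U by exists (f u).
have [X EX] : exists X, f v = X by exists (f v).
have XinU : X \in bt_c T U by rewrite -EU -EX -HA.
have [pU HpU] : exists pU, bt_par T U = Some pU.
  case E: (bt_par T U) => [p|]; first by exists p.
  move/(bt_par_none T): E => E.
  by rewrite (bt_c_trivial (or_introl E)) inE in XinU.
have [x1 Hx1] : exists x1, bt_lb T pU = Some x1.
  case E: (bt_lb T pU) => [x|]; first by exists x.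
  by have := bt_lb_leaf E HpU.
have x1U : x1 <> U.
  move=> E; subst x1.
  by rewrite (bt_c_trivial (or_intror (ex_intro _ pU Hx1))) inE in XinU.
have [sU [cU hsU]] := bt_c_branch HpU Hx1 x1U.
case: hsU => [sU0|[tU [EsU HtU]]].
  by move: XinU; rewrite cU sU0 inE.
subst sU.
have Hpx1 : bt_par T x1 = Some pU := bt_lb_child Hx1.
have XinS : X \in x1 :: tU by move: XinU; rewrite cU inE.
have [q Hq] : exists q, bt_par T X = Some q.
  case E: (bt_par T X) => [p|]; first by exists p.
  move: XinS; rewrite inE => /orP[/eqP EX1|XinT].
    by rewrite EX1 Hpx1 in E.
  have [k Hk] := PLs HtU XinT.
  by rewrite iterSr /= E iter_none in Hk.
have [L HL0] : exists L, bt_lb T q = Some L.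
  case E: (bt_lb T q) => [x|]; first by exists x.
  by have := bt_lb_leaf E Hq.
have HL : bt_par T L = Some q := bt_lb_child HL0.
have cL : bt_c T L = set0 := bt_c_trivial (or_intror (ex_intro _ q HL0)).
have UL : U != L.
  by apply/eqP => E; rewrite E cL inE in XinU.
have UX : U != X.
  apply/eqP => E; rewrite E in HpU x1U.
  move: XinS; rewrite inE => /orP[/eqP EX1|XinT].
    by apply: x1U; rewrite EX1.
  have [k Hk] := PLs HtU XinT.
  move: Hk; rewrite iterSr /= HpU => Hk.
  apply: (@acyc V T k x1); by rewrite iterSr /= Hpx1.
have [sX [cX hsX]] : exists sX, bt_c T X = [set y in sX] /\
    (sX = [::] \/ exists t, sX = L :: t /\ path (fun a b => bt_par T b == Some a) L t).
  case: (eqVneq X L) => [EXL|NXL].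
    exists [::]; split; last by left.
    by rewrite EXL cL; apply/setP => y; rewrite !inE.
  by apply: bt_c_branch Hq HL0 _; apply/eqP; rewrite eq_sym.
have Hroot : bt_par T (bt_root T) = None by apply/(bt_par_none T).
have sim' := sim Hq HL.
have H1 : forall w, npar T X L q w = None <-> w = old (bt_root T).
  case=> [[[z|]|]|] /=; try by split.
  case: ifP => H.
    split => // -[Ez]; exfalso.
    by case/orP: H => /eqP E; move: Hroot; rewrite -Ez E ?Hq ?HL.
  split.
    case E: (bt_par T z) => [p|] //= _.
    by rewrite (proj1 (bt_par_none T z) E).
  by move=> [->]; rewrite Hroot.
have H2 : forall w, exists n, iter n (obind (npar T X L q)) (Some w) = Some (old (bt_root T)).
  have Hold : forall z, exists n, iter n (obind (npar T X L q)) (Some (old z)) = Some (old (bt_root T)).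
    move=> z; have [n Hn] := bt_reach T z; exact: sim' Hn.
  case=> [[[z|]|]|]; first exact: Hold.
  - have [m Hm] := Hold q; exists m.+2; by rewrite !iterSr /=.
  - have [m Hm] := Hold q; exists m.+2; by rewrite !iterSr /=.
  - have [m Hm] := Hold q; exists m.+1; by rewrite !iterSr /=.
have H3 : forall w x, nlb T L q w = Some x -> npar T X L q x = Some w.
  case=> [[[z|]|]|] x //=.
  - case: eqP => [->|Nz]; first by move=> [<-].
    case E: (bt_lb T z) => [x'|] //= [<-] /=.
    have Hp := bt_lb_child E.
    case: ifP => H; last by rewrite Hp.
    by exfalso; apply: Nz; case/orP: H => /eqP Ex; subst x'; congruence.
  - by move=> [<-] /=; rewrite eqxx orbT.
  - by move=> [<-].
have H4 : forall w, nlb T L q w = None -> forall x, npar T X L q x <> Some w.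
  case=> [[[z|]|]|] //=.
  - case: eqP => // Nz.
    case E: (bt_lb T z) => //= _ x.
    case: x => [[[y|]|]|] //=.
      case: ifP => // _.
      case E2: (bt_par T y) => [p|] //= [Ep]; subst p.
      exact: (bt_lb_leaf E E2).
    by move=> [Eq]; apply: Nz.
  - move=> _; case=> [[[y|]|]|] //=.
    case: ifP => // _.
    by case: (bt_par T y).
have Hc0 : forall z, bt_c T z = set0 -> nc T X L U (x1 :: tU) sX (old z) = set0.
  move=> z Hz.
  have zU : z != U by apply/eqP => E; rewrite -E Hz inE in XinU.
  rewrite /= (negbTE zU).
  case: eqP => [EzX|_].
    subst z; move: cX; rewrite Hz.
    case: sX {hsX} => [|y s] E; first by apply/setP => w; rewrite !inE.
    by have := in_set0 y; rewrite E inE mem_head.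
  by rewrite Hz imset0 set0U !inE.
have H5 : forall w, w = old (bt_root T) \/ (exists y, nlb T L q y = Some w) ->
    nc T X L U (x1 :: tU) sX w = set0.
  move=> w [->|[y]].
    by apply: Hc0; apply: bt_c_trivial; left.
  case: y => [[[z|]|]|] //=.
  - case: eqP => [_ [<-]//|Nz].
    case E: (bt_lb T z) => [x|] //= [<-].
    by apply: Hc0; apply: bt_c_trivial; right; exists z.
  - by move=> [<-]; apply: Hc0.
  - by move=> [<-].
have H6 : forall w p x, npar T X L q w = Some p -> nlb T L q p = Some x -> x <> w ->
    exists s, nc T X L U (x1 :: tU) sX w = [set y in s] /\
      (s = [::] \/ exists t, s = x :: t /\ path (fun a b => npar T X L q b == Some a) x t).
  case=> [[[z|]|]|] p x /=.
  - case: ifP => HzXL.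
      move=> [<-] /= [<-] Hne.
      have EzX : z = X.
        case/orP: HzXL => /eqP // EzL; by exfalso; apply: Hne; rewrite EzL.
      subst z; have XU : (X == U) = false by apply/negbTE; rewrite eq_sym.
      rewrite XU eqxx.
      exists (hdlift X L sX); split => //.
      case: hsX => [->|[t [-> Ht]]]; [by left | right].
      exists (liftp X L t); split => //.
      exact: liftp_path Hq HL Ht.
    case E: (bt_par T z) => [p0|] //= [<-] Hx Hne.
    have HzX : (z == X) = false by move/negbT: HzXL; case/norP => /negbTE.
    case: (eqVneq z U) => [EzU|NzU].
      rewrite EzU in E Hne HzXL HzX *.
      have Ep : p0 = pU by congruence.
      subst p0.
      exists (liftp X L (take (index X (x1 :: tU)) (x1 :: tU)) ++ [:: None; Some (Some None)]).
      split => //; right.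
      case: (eqVneq x1 X) => [Ex1|Nx1].
        have EpU : pU = q by congruence.
        subst pU; move: Hx; rewrite /= eqxx => -[<-].
        have -> : take (index X (x1 :: tU)) (x1 :: tU) = [::] by rewrite Ex1 /= eqxx.
        exists [:: Some (Some None)]; split => //=.
      have XinT : X \in tU by move: XinS; rewrite inE eq_sym (negbTE Nx1).
      have Etake : take (index X (x1 :: tU)) (x1 :: tU) = x1 :: take (index X tU) tU.
        by rewrite /= (negbTE Nx1).
      rewrite Etake.
      set i := index X tU.
      have Etu : tU = take i tU ++ X :: drop i.+1 tU.
        by rewrite -{1}(cat_take_drop i tU) (drop_nth X) ?index_mem // nth_index.
      move: (HtU); rewrite {1}Etu cat_path => /andP[Hp1 /= /andP[/eqP Hlast _]].
      have Elast : last x1 (take i tU) = q by congruence.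
      have [t' [Et' [Hpt' Hlt']]] := head_ok Hq HL HL0 Hx1 Hx Hp1.
      rewrite Et'; exists (t' ++ [:: None; Some (Some None)]); split => //.
      by rewrite cat_path Hpt' Hlt' Elast /= !eqxx.
    rewrite HzX.
    have [x1' [Hx1' Hne']] : exists x1', bt_lb T p0 = Some x1' /\ x1' <> z.
      case: (eqVneq p0 q) => [Ep|Np].
        subst p0; exists L; split => // ELz.
        by rewrite ELz eqxx orbT in HzXL.
      move: Hx; rewrite /= (negbTE Np).
      case E': (bt_lb T p0) => [y|] //= [Ey].
      exists y; split => // Eyz; apply: Hne; by rewrite -Ey Eyz.
    have [s [cz hs]] := bt_c_branch E Hx1' Hne'.
    exists (liftp X L s); split; first by rewrite (set_liftp X L cz).
    case: hs => [->|[t [-> Ht]]]; [by left | right].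
    have [t' [Et' [Hpt' _]]] := head_ok Hq HL HL0 Hx1' Hx Ht.
    by exists t'; rewrite Et'.
  - move=> [<-] /= [<-] _.
    exists [:: Some None; old X]; split.
      by apply/setP => y; rewrite !inE.
    right; exists [:: old X]; split => //=.
    by rewrite eqxx.
  - by move=> [<-] /= [<-] [].
  - by move=> [<-] /=; rewrite eqxx => -[<-] [].
have ancw : forall Y, anc T Y X -> Y != X ->
    exists m, iter m (obind (npar T X L q)) (Some (Some (Some None))) = Some (old Y).
  move=> Y [[|n] Hn] NY.
    by move: Hn => [E]; rewrite E eqxx in NY.
  move: Hn; rewrite iterSr /= Hq => /sim' [m Hm].
  by exists (m + 2); rewrite iterD /=.
have fvX : forall b, (f b == X) = (b == v).
  by move=> b; rewrite -EX (inj_eq finj).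
have Hsub : forall b, A u b -> b != v -> anc T (f b) X /\ f b != X.
  move=> b Hb Nb; split; first by rewrite -EX; apply: Hbot.
  by rewrite fvX.
exists (V3 V), (BurlingTree H1 H2 H3 H4 H5 H6),
  (fun o : option W => if o is Some w then old (f w) else Some (Some None)).
split.
  split.
    by case=> [a|] [b|] //= [/finj ->].
  case=> [a|] [b|]; rewrite /subdiv;
    change (bt_c (BurlingTree H1 H2 H3 H4 H5 H6)) with (nc T X L U (x1 :: tU) sX);
    rewrite ?ncE_old ?ncE_w.
  - case: (eqVneq a u) => [->|Nau].
      rewrite EU eqxx inE mem_cat mem_liftp_old !inE /= orbF xpair_eqE eqxx /=.
      rewrite HA EU cU inE.
      apply/idP/idP.
        move=> /andP[Hin Hne].
        have Hb : A u b by rewrite HA EU cU inE.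
        have [Hanc NbX] := Hsub b Hb Hne.
        exact: take_anc HtU XinS Hin NbX Hanc.
      move=> Hin; have Hin' := mem_take Hin; rewrite Hin' /=.
      apply/negP => /eqP Ebv; subst b.
      by move: Hin; rewrite EX (in_take _ XinS) /= ltnn.
    have NfU : (f a == U) = false by rewrite -EU (inj_eq finj); exact/negbTE.
    rewrite NfU.
    have -> : ((a, b) != (u, v)) = true by rewrite /= xpair_eqE (negbTE Nau).
    rewrite andbT HA.
    case: (eqVneq (f a) X) => [EaX|NaX].
      by rewrite inE mem_hdlift_old EaX cX inE.
    rewrite !inE (mem_imset _ _ (fun a b (E : old a = old b) => let: erefl := E in erefl)).
    have NS : (old (f b) == Some None :> V3 V) = false by apply/eqP.
    by case: ifP => _; rewrite !inE /= ?NS ?orbF.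
  - case: (eqVneq a u) => [->|Nau].
      by rewrite EU eqxx inE mem_cat mem_liftp_nw /= !inE eqxx orbT.
    have NfU : (f a == U) = false by rewrite -EU (inj_eq finj); exact/negbTE.
    rewrite NfU; case: (eqVneq (f a) X) => [EaX|NaX].
      by rewrite inE mem_hdlift_nw.
    rewrite !inE; apply/esym/norP; split.
      by apply/imsetP => -[].
    by case: ifP => _; rewrite ?inE.
  - by rewrite !inE -fvX; apply/eqP/eqP => [->|[]].
  - by apply/esym/negbTE; rewrite !inE; apply/norP; split; apply/eqP.
split.
  split; first by rewrite /= eqxx.
  case=> [b|] /= H; last by exists 0.
  move: H => /andP[Hb Nb].
  have Nbv : b != v by apply: contra Nb => /eqP->.
  have [Hanc NbX] := Hsub b Hb Nbv.
  have [m Hm] := ancw _ Hanc NbX.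
  by exists m.
split.
  split; first by rewrite /= eqxx.
  by case=> [b|] //= /eqP ->; exists 0.
split.
  split; first by rewrite /= eqxx.
  by case=> [b|] //= /eqP ->; exists 0.
split.
  move=> x y [Hxy Htop] Nxy; split.
    by rewrite /= Hxy /=; apply/eqP.
  case=> [b|] /=.
    move=> /andP[Hb _]; have [n Hn] := Htop b Hb.
    have [m Hm] := sim' _ _ _ Hn; by exists m.
  move=> /eqP Exu; subst x.
  have Nyv : y != v by apply/eqP => E; apply: Nxy; rewrite E.
  have [Hanc NbX] := Hsub y Hxy Nyv.
  have [m Hm] := ancw _ Hanc NbX; by exists m.
move=> x y [Hxy Hb'] Nxy; split.
  by rewrite /= Hxy /=; apply/eqP.
case=> [b|] /=.
  move=> /andP[Hb _]; have [n Hn] := Hb' b Hb.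
  have [m Hm] := sim' _ _ _ Hn; by exists m.
move=> /eqP Exu; subst x; exfalso.
have Nyv : y != v by apply/eqP => E; apply: Nxy; rewrite E.
have E := anc_antisym (Hbot y Hxy) (Hb' v Huv).
by move/finj: E => E; rewrite E eqxx in Nyv.
Qed.
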